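(* Let $p$ be an odd prime, $n,k$ positive integers, $d=\frac{p^k+1}{2}$ and $F(x)=x^d$ on $\mathrm{GF}(p^n)$. Then $F$ is perfect $c$-nonlinear for $c=-1$ if and only if $\frac{k}{\gcd(k,n)}$ is even.
   Context: For a function $F:\mathrm{GF}(p^n)\to\mathrm{GF}(p^n)$ and $a,b,c\in\mathrm{GF}(p^n)$, let ${}_c\Delta_F(a,b)=\#\{x\in\mathrm{GF}(p^n): F(x+a)-cF(x)=b\}$. The $c$-differential uniformity of $F$ is ${}_c\Delta_F=\max\{{}_c\Delta_F(a,b): a,b\in\mathrm{GF}(p^n),\ \text{and } a\neq 0 \text{ if } c=1\}$. $F$ is perfect $c$-nonlinear (P$c$N) if ${}_c\Delta_F=1$. *)

(* Defs.v *)
From HB Require Import structures.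
From mathcomp Require Import all_boot all_order all_algebra all_field.
Set Implicit Arguments. Unset Strict Implicit. Unset Printing Implicit Defensive.
Import GRing.Theory.
Local Open Scope ring_scope.

Definition cDelta (F : finFieldType) (f : F -> F) (c a b : F) : nat :=
  #|[set x : F | f (x + a) - c * f x == b]|.

Definition cDiffUnif (F : finFieldType) (f : F -> F) (c : F) : nat :=
  (\max_(ab : F * F | (c != (1%R : F)) || (ab.1 != (0%R : F))) cDelta f c ab.1 ab.2)%N.

Definition PcN (F : finFieldType) (f : F -> F) (c : F) : Prop :=
  cDiffUnif f c = 1%N.

(* Main.v *)
Require Import Defs.
From HB Require Import structures.
From mathcomp Require Import all_boot all_order all_algebra all_field.
From mathcomp Require Import ring lra zify.
Import GRing.Theory.
Local Open Scope ring_scope.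

Ltac fsolve := field; repeat (apply/andP; split); try assumption.

Section Gen.
Variables (L : fieldType) (p : nat).
Hypothesis pchL : p \in [pchar L].

Lemma frobD j (a b : L) : (a + b) ^+ (p ^ j) = a ^+ (p ^ j) + b ^+ (p ^ j).
Proof.
elim: j => [|j IH]; first by rewrite !expn0 !expr1.
by rewrite expnSr !exprM IH -!(pFrobenius_autE pchL) rmorphD.
Qed.

Lemma frob_nat j m : (m%:R : L) ^+ (p ^ j) = m%:R.
Proof.
elim: j => [|j IH]; first by rewrite expn0 expr1.
by rewrite expnSr exprM IH -(pFrobenius_autE pchL) pFrobenius_aut_nat.
Qed.

Lemma frobN j (a : L) : odd p -> (- a) ^+ (p ^ j) = - a ^+ (p ^ j).
Proof.
move=> op; rewrite exprNn -signr_odd oddX op orbT expr1 mulN1r //.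
Qed.

Lemma itexp (x : L) e j : x ^+ e = x -> x ^+ (e ^ j) = x.
Proof.
move=> H; elim: j => [|j IH]; first by rewrite expn0 expr1.
by rewrite expnSr exprM IH H.
Qed.

Lemma itinv (x : L) e j : x ^+ e = x^-1 ->
  x ^+ (e ^ j) = if odd j then x^-1 else x.
Proof.
move=> H; elim: j => [|j IH]; first by rewrite expn0 expr1.
rewrite expnSr exprM IH /=; case: (odd j) => /=.
  by rewrite exprVn H invrK.
by rewrite H.
Qed.

Lemma quad {T t : L} : T != 0 -> t != 0 -> T + T^-1 = t + t^-1 ->
  T = t \/ T = t^-1.
Proof.
move=> T0 t0 E.
have : (T - t) * (T * t - 1) = 0.
  have -> : (T - t) * (T * t - 1) = T * t * ((T + T^-1) - (t + t^-1)) by fsolve.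
  by rewrite E subrr mulr0.
move/eqP; rewrite mulf_eq0 => /orP[]; rewrite subr_eq0 => /eqP H; first by left.
by right; rewrite -[T](mulfK t0) H div1r.
Qed.

Lemma fix2 n (t : L) : t != 0 -> (t + t^-1) ^+ (p ^ n) = t + t^-1 ->
  t ^+ (p ^ n * p ^ n) = t.
Proof.
move=> t0 H; rewrite frobD exprVn in H.
have T0 : t ^+ (p ^ n) != 0 by rewrite expf_neq0.
case: (quad T0 t0 H) => E; rewrite exprM E; first by [].
by rewrite exprVn E invrK.
Qed.

Lemma key_pow q (u : L) : odd p -> u != 0 ->
  let w := (u + u^-1) / 2%:R in let z := (u - u^-1) / 2%:R in
  w ^+ (p ^ q).+1 + z ^+ (p ^ q).+1 = (u ^+ (p ^ q).+1 + (u ^+ (p ^ q).+1)^-1) / 2%:R.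
Proof.
move=> op u0 w z.
have two0 : (2%:R : L) != 0.
  have p2 : p != 2%N by apply: contraTneq op => ->.
  rewrite -(dvdn_pcharf pchL); apply/negP => H; have := dvdn_leq (isT : (0 < 2)%N) H.
  have := prime_gt1 (pcharf_prime pchL); lia.
set U := u ^+ (p ^ q).
have U0 : U != 0 by rewrite expf_neq0.
have i2 : (2%:R^-1 : L) ^+ (p ^ q) = 2%:R^-1 by rewrite exprVn frob_nat.
have wq : w ^+ (p ^ q) = (U + U^-1) / 2%:R.
  by rewrite /w exprMn frobD i2 exprVn.
have zq : z ^+ (p ^ q) = (U - U^-1) / 2%:R.
  by rewrite /z exprMn frobD frobN // i2 exprVn.
rewrite !exprSr wq zq -/U invfM /w /z.
by fsolve.
Qed.
End Gen.

Lemma hd2 p k : odd p -> ((p ^ k).+1 %/ 2 * 2 = (p ^ k).+1)%N.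
Proof. by move=> op; rewrite divnK // dvdn2 /= oddX op orbT. Qed.

Lemma itexpL (L : fieldType) (x : L) e j : x ^+ e = x -> x ^+ (e ^ j) = x.
Proof.
move=> H; elim: j => [|j IH]; first by rewrite expn0 expr1.
by rewrite expnSr exprM IH H.
Qed.

Lemma dodd p k : odd p -> ~~ odd k -> odd ((p ^ k).+1 %/ 2).
Proof.
move=> op ek.
have k2 : k = (k./2 * 2)%N by rewrite -{1}(odd_double_half k) (negbTE ek) add0n muln2.
have p4 : (p ^ 2 %% 4 = 1)%N.
  have hp := odd_double_half p; rewrite op in hp.
  rewrite -hp; set h := p./2. 
  have -> : ((1 + h.*2) ^ 2 = 1 + (h * h + h) * 4)%N by rewrite -!muln2; ring.
  by rewrite addnC modnMDl.
have pk : (p ^ k %% 4 = 1)%N by rewrite k2 mulnC expnM -modnXm p4 exp1n.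
set P := (p ^ k)%N in pk *.
have -> : ((P.+1) %/ 2 = (P %/ 4).*2.+1)%N by lia.
by rewrite /= odd_double.
Qed.

Lemma Rone (L : fieldType) p k n (R : L) : odd p -> (0 < k)%N ->
  ~~ odd (k %/ gcdn k n) -> R != 0 -> R ^+ ((p ^ k).+1 %/ 2) = 1 ->
  R ^+ (p ^ n * p ^ n) = R -> R = 1.
Proof.
move=> op k0 ev R0 Rd Rn.
set m := gcdn k n.
have Rk : R ^+ (p ^ k) = R^-1.
  have : R ^+ (p ^ k) * R = 1.
    by rewrite -exprSr -(hd2 p k op) exprM Rd expr1n.
  by move=> H; rewrite -[LHS](mulfK R0) H div1r.
have R2k : R ^+ (p ^ k * p ^ k) = R by rewrite exprM Rk exprVn Rk invrK.
have [a _ da] := Bezoutl n k0.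
set c := ((gcdn k n + a * n) %/ k)%N.
have ec : (gcdn k n + a * n = k * c)%N by rewrite /c [(k * _)%N]mulnC divnK.
have Ym : R ^+ (p ^ m * p ^ m) = R.
  have h1 : R ^+ ((p ^ k * p ^ k) ^ c) = R by apply: itexpL.
  have e1 : ((p ^ k * p ^ k) ^ c = (p ^ m * p ^ m) * (p ^ n * p ^ n) ^ a)%N.
    by rewrite expnMn -!expnM -ec !expnD !expnMn -!expnM [(n * a)%N]mulnC; ring.
  rewrite e1 exprM in h1.
  have h2 : (R ^+ (p ^ m * p ^ m)) ^+ (p ^ n * p ^ n) = R ^+ (p ^ m * p ^ m).
    by rewrite -exprM mulnC exprM Rn.
  by rewrite (@itexpL _ _ _ a h2) in h1.
have mk : (k = m * (k %/ m))%N by rewrite mulnC divnK // dvdn_gcdl.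
have hj := odd_double_half (k %/ m); rewrite (negbTE ev) add0n in hj.
have Rk2 : R ^+ (p ^ k) = R.
  have -> : (p ^ k = (p ^ m * p ^ m) ^ (k %/ m)./2)%N.
    rewrite -expnD -expnM; congr (expn p _); rewrite {1}mk.
    set j := (k %/ m)%N in hj *; rewrite -{1}hj -muln2; ring.
  exact: itexpL.
have R2 : R * R = 1 by rewrite -{1}Rk2 Rk mulVf.
have ek : ~~ odd k by rewrite mk oddM (negbTE ev) andbF.
have dd := dodd p k op ek.
have hd := odd_double_half ((p ^ k).+1 %/ 2); rewrite dd in hd.
by rewrite -Rd -hd exprD expr1 -mul2n exprM expr2 R2 expr1n mulr1.
Qed.

Lemma sqrt_ex (L : closedFieldType) (c : L) : exists y : L, y ^+ 2 = c.
Proof.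
have [y Hy] := @solve_monicpoly L 2 (fun i => if i == 0%N then c else 0) isT.
by exists y; rewrite Hy !big_ord_recl big_ord0 /= mulr1 mul0r !addr0.
Qed.

Section Main.
Variables (F : finFieldType) (L : closedFieldType) (iota : {rmorphism F -> L}).
Variables (p n k : nat).
Hypotheses (op : odd p) (pchL : p \in [pchar L]) (cardF : #|F| = (p ^ n)%N).

Let d := ((p ^ k).+1 %/ 2)%N.

Lemma two0 : (2%:R : L) != 0.
Proof.
have p2 : p != 2%N by apply: contraTneq op => ->.
rewrite -(dvdn_pcharf pchL); apply/negP => H; have := dvdn_leq (isT : (0 < 2)%N) H.
have := prime_gt1 (pcharf_prime pchL); lia.
Qed.

Lemma fixF (c : F) : (iota c) ^+ (p ^ n) = iota c.
Proof. by rewrite -rmorphXn -cardF expf_card. Qed.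

Lemma preim (t : L) : t ^+ (p ^ n) = t -> exists c : F, iota c = t.
Proof.
move=> Ht; case: (boolP [exists c, iota c == t]) => [/existsP [c /eqP] | H].
  by exists c.
exfalso.
have pn1 : (1 < p ^ n)%N by rewrite -cardF card_finNzRing_gt1.
pose P : {poly L} := 'X^(p ^ n) - 'X.
have sP : size P = (p ^ n).+1.
  by rewrite /P size_polyDl size_polyXn // size_polyN size_polyX.
have P0 : P != 0 by rewrite -size_poly_eq0 sP.
have rt y : y ^+ (p ^ n) = y -> root P y.
  by move=> Hy; rewrite /root /P !hornerE Hy subrr.
have H1 : all (root P) (t :: map iota (enum F)).
  rewrite /= rt //=; apply/allP => y /mapP [c _ ->]; exact/rt/fixF.
have H2 : uniq (t :: map iota (enum F)).
  rewrite /= map_inj_uniq ?enum_uniq ?andbT; last exact: fmorph_inj.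
  apply/mapP => [[c _ Hc]]; move/existsP: H; apply; exists c; by rewrite Hc.
have := max_poly_roots P0 H1 H2.
by rewrite /= size_map -cardE cardF sP ltnn.
Qed.

Lemma Gval (x : F) (u : L) : u != 0 -> iota x = ((u - u^-1) / 2%:R) ^+ 2 ->
  iota ((x + 1) ^+ d + x ^+ d) =
  ((u ^+ 2) ^+ d + ((u ^+ 2) ^+ d)^-1) / 2%:R.
Proof.
move=> u0 hx; have t0 := two0.
have hx1 : iota (x + 1) = ((u + u^-1) / 2%:R) ^+ 2.
  by rewrite rmorphD rmorph1 hx; fsolve.
rewrite rmorphD !rmorphXn hx1 hx -!exprM mul2n -muln2 hd2 //.
exact: (@key_pow _ _ pchL k u op u0).
Qed.

Lemma paramEx (x : F) : exists u : L, u != 0 /\ iota x = ((u - u^-1) / 2%:R) ^+ 2.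
Proof.
have t0 := two0.
have [z hz] := @sqrt_ex _ (iota x); have [w hw] := @sqrt_ex _ (iota x + 1).
have hu : (w + z) * (w - z) = 1.
  transitivity (w ^+ 2 - z ^+ 2); first by ring.
  by rewrite hw hz; ring.
have u0 : w + z != 0 by apply: contra_eq_neq hu => ->; rewrite mul0r eq_sym oner_eq0.
exists (w + z); split => //.
have -> : (w + z)^-1 = w - z by rewrite -[w - z](mulKf u0) hu mulr1.
rewrite -hz; congr (_ ^+ 2); fsolve.
Qed.

Lemma Vfix (c : F) (V : L) : V != 0 -> iota c = (V + V^-1 - 2%:R) / 4%:R ->
  V ^+ (p ^ n * p ^ n) = V.
Proof.
move=> V0 hc; have t0 := two0; apply: (@fix2 _ _ pchL n V V0).
have -> : V + V^-1 = iota (4%:R * c + 2%:R).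
  rewrite rmorphD rmorphM !rmorph_nat hc.
  have f0 : (4%:R : L) != 0 by rewrite (_ : 4%:R = 2%:R * 2%:R) ?mulf_neq0 // -natrM.
  fsolve.
exact: fixF.
Qed.


Lemma inj1 : (0 < k)%N -> ~~ odd (k %/ gcdn k n) ->
  forall x y : F, (x + 1) ^+ d + x ^+ d = (y + 1) ^+ d + y ^+ d -> x = y.
Proof.
move=> k0 ev x y E; have t0 := two0.
have [ux [ux0 hx]] := paramEx x; have [uy [uy0 hy]] := paramEx y.
have Gx := Gval x ux ux0 hx; have Gy := Gval y uy uy0 hy.
set Vx := ux ^+ 2 in Gx; set Vy := uy ^+ 2 in Gy.
have Vx0 : Vx != 0 by rewrite expf_neq0.
have Vy0 : Vy != 0 by rewrite expf_neq0.
have hxV : iota x = (Vx + Vx^-1 - 2%:R) / 4%:R.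
  rewrite hx /Vx; have f0 : (4%:R : L) != 0.
    by rewrite (_ : 4%:R = 2%:R * 2%:R) ?mulf_neq0 // -natrM.
  fsolve.
have hyV : iota y = (Vy + Vy^-1 - 2%:R) / 4%:R.
  rewrite hy /Vy; have f0 : (4%:R : L) != 0.
    by rewrite (_ : 4%:R = 2%:R * 2%:R) ?mulf_neq0 // -natrM.
  fsolve.
have fx := Vfix x Vx Vx0 hxV; have fy := Vfix y Vy Vy0 hyV.
have EU : Vx ^+ d + (Vx ^+ d)^-1 = Vy ^+ d + (Vy ^+ d)^-1.
  apply: (mulIf (invr_neq0 t0)); by rewrite -Gx -Gy E.
have Ux0 : Vx ^+ d != 0 by rewrite expf_neq0.
have Uy0 : Vy ^+ d != 0 by rewrite expf_neq0.
apply: (fmorph_inj iota); rewrite hxV hyV.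
case: (@quad _ _ _ Ux0 Uy0 EU) => HU.
- have R1 : Vx / Vy = 1.
    apply: (@Rone _ p k n _ op k0 ev).
    + by rewrite mulf_neq0 ?invr_neq0.
    + by rewrite exprMn exprVn HU divff.
    + by rewrite exprMn exprVn fx fy.
  by rewrite -(divfK Vy0 Vx) R1 mul1r.
- have R1 : Vx * Vy = 1.
    apply: (@Rone _ p k n _ op k0 ev).
    + by rewrite mulf_neq0.
    + by rewrite exprMn HU mulVf.
    + by rewrite exprMn fx fy.
  by rewrite -(mulfK Vy0 Vx) R1 div1r invrK [Vy^-1 + _]addrC.
Qed.


Lemma collide : (0 < k)%N -> (0 < n)%N -> odd (k %/ gcdn k n) ->
  exists x : F, x != 0 /\ (x + 1) ^+ d + x ^+ d = 1.
Proof.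
move=> k0 n0 ok; have t0 := two0.
have f0 : (4%:R : L) != 0.
  by rewrite (_ : 4%:R = 2%:R * 2%:R) ?mulf_neq0 // -natrM.
set m := gcdn k n.
have m0 : (0 < m)%N by rewrite gcdn_gt0 k0.
have pp := pcharf_prime pchL.
set r := ((p ^ m).+1 %/ 2)%N.
have r2 : (r * 2 = (p ^ m).+1)%N by rewrite hd2.
have p3 : (2 < p)%N.
  have := prime_gt1 pp; have p2 : p != 2%N by apply: contraTneq op => ->.
  lia.
have pm3 : (p <= p ^ m)%N.
  by rewrite -{1}(expn1 p) leq_exp2l // prime_gt1.
have r0 : (1 < r)%N by lia.
have r10 : (0 < r.-1)%N by lia.
have [v Hv] := @solve_monicpoly L r.-1 (fun _ => -1) r10.
have sum0 : \sum_(i < r) v ^+ i = 0.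
  rewrite -(prednK (ltnW r0)) big_ord_recr /= Hv -big_split big1 // => i _.
  by rewrite /= mulN1r addrN.
have vr : v ^+ r = 1 by apply/eqP; rewrite -subr_eq0 subrX1 sum0 mulr0.
have v1 : v != 1.
  apply/eqP => v1; move: sum0; rewrite v1 (eq_bigr (fun _ => 1)); last by move=> i _; rewrite expr1n.
  rewrite sumr_const card_ord => /eqP; rewrite -(dvdn_pcharf pchL) => pr.
  have : (p %| r * 2)%N by rewrite dvdn_mulr.
  rewrite r2 -addn1 dvdn_addr ?dvdn_exp // dvdn1 => /eqP p1.
  by rewrite p1 in pp.
have [s hs] := @sqrt_ex _ v.
have s0 : s != 0.
  apply/eqP => s0; move: vr; rewrite -hs s0 expr0n /= expr0n gtn_eqF ?(ltnW r0) //.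
  by move/eqP; rewrite eq_sym oner_eq0.
have sm : s ^+ (p ^ m) = s^-1.
  have : s ^+ (p ^ m) * s = 1 by rewrite -exprSr -r2 mulnC exprM hs vr.
  by move=> H; rewrite -[LHS](mulfK s0) H div1r.
have sk : s ^+ (p ^ k) = s^-1.
  have -> : (p ^ k = (p ^ m) ^ (k %/ m))%N by rewrite -expnM [(m * _)%N]mulnC divnK // dvdn_gcdl.
  by rewrite (@itinv _ _ _ _ sm) ok.
have sn : s ^+ (p ^ n) = if odd (n %/ m) then s^-1 else s.
  have -> : (p ^ n = (p ^ m) ^ (n %/ m))%N by rewrite -expnM [(m * _)%N]mulnC divnK // dvdn_gcdr.
  by rewrite (@itinv _ _ _ _ sm).
have tfix : (v + v^-1) ^+ (p ^ n) = v + v^-1.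
  rewrite frobD // exprVn -hs exprAC sn.
  by case: (odd _); rewrite ?exprVn ?invrK // addrC.
have [c hc] := @preim _ tfix.
exists ((c - 2%:R) / 4%:R).
have hx : iota ((c - 2%:R) / 4%:R) = ((s - s^-1) / 2%:R) ^+ 2.
  rewrite fmorph_div rmorphB !rmorph_nat hc -hs; fsolve.
split.
  apply/eqP => x0; move: hx; rewrite x0 rmorph0 => /eqP.
  rewrite eq_sym expf_eq0 /= mulf_eq0 invr_eq0 (negbTE t0) orbF subr_eq0 => /eqP ss.
  by move/eqP: v1; apply; rewrite -hs expr2 {2}ss divff.
apply: (fmorph_inj iota); rewrite (Gval _ _ s0 hx) rmorph1.
rewrite -exprM mul2n -muln2 hd2 // exprSr sk mulVf // invr1.
by rewrite -[1 + 1]/(2%:R : L) divff.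
Qed.
End Main.
Theorem theorem3 (F : finFieldType) (p n k : nat) :
  prime p -> odd p -> p \in [pchar F] -> #|F| = (p ^ n)%N ->
  (0 < n)%N -> (0 < k)%N ->
  PcN (fun x : F => x ^+ ((p ^ k).+1 %/ 2)) (-1) <-> ~~ odd (k %/ gcdn k n).
Proof.
move=> pp op pchF cardF n0 k0.
have [L [iota _]] := countable_algebraic_closure F.
have pchL : p \in [pchar L] := rmorph_pchar iota pchF.
set d := ((p ^ k).+1 %/ 2)%N.
have d0 : (0 < d)%N.
  rewrite /d; have : (0 < p ^ k)%N by rewrite expn_gt0 prime_gt0.
  set P := (p ^ k)%N; lia.
have cD a b : cDelta (fun x : F => x ^+ d) (-1) a b =
    #|[set x : F | (x + a) ^+ d + x ^+ d == b]|.
  by rewrite /cDelta; apply: eq_card => x; rewrite !inE mulN1r opprK.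
have cond : ((-1 : F) != 1) || (((1 : F), (1 : F)).1 != (0 : F)) by rewrite /= oner_neq0 orbT.
split.
- move=> H; apply/negP => ok.
  have [x [x0 Gx]] := collide _ _ iota _ _ _ op pchL cardF k0 n0 ok.
  have : (1 < cDelta (fun x : F => x ^+ d) (-1)%R 1%R 1%R)%N.
    rewrite cD ltnNge; apply/card_le1_eqP => /(_ x 0).
    rewrite !inE Gx add0r expr1n expr0n gtn_eqF // addr0 eqxx => /(_ isT isT) x0'.
    by rewrite x0' eqxx in x0.
  have := @leq_bigmax_cond _ (fun ab : F * F => ((-1 : F) != (1%R : F)) || (ab.1 != (0%R : F))) (fun ab : F * F => cDelta (fun x : F => x ^+ d) (-1) ab.1 ab.2) ((1:F), (1:F)) cond.
  move: H; rewrite /PcN /cDiffUnif => -> /=; lia.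
- move=> ev; rewrite /PcN /cDiffUnif; apply/eqP; rewrite eqn_leq; apply/andP; split.
  + apply/bigmax_leqP => [[a b]] _ /=; rewrite cD; apply/card_le1_eqP => x y.
    rewrite !inE => /eqP hx /eqP hy; rewrite -hy in hx.
    case: (eqVneq a 0) => [a0 | a0].
    * rewrite a0 !addr0 in hx.
      have t0L := two0 F L p n k op pchL cardF.
      have t0F : (2%:R : F) != 0.
        by apply: contra_neq t0L => H; rewrite -(rmorph_nat iota) H rmorph0.
      have e : x ^+ d = y ^+ d by apply: (mulIf t0F); rewrite !mulr_natr !mulr2n.
      case: (eqVneq x 0) => [x0 | x0].
        move: e; rewrite x0 expr0n gtn_eqF // => /eqP; rewrite eq_sym expf_eq0 d0 /=.
        by move/eqP.
      case: (eqVneq y 0) => [y0 | y0].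
        move: e; rewrite y0 expr0n gtn_eqF // => /eqP; rewrite expf_eq0 d0 /=.
        by move/eqP.
      have ix0 : iota x != 0 by rewrite fmorph_eq0.
      have iy0 : iota y != 0 by rewrite fmorph_eq0.
      apply: (fmorph_inj iota).
      have R1 : iota x / iota y = 1.
        apply: (Rone L p k n _ op k0 ev).
        + by rewrite mulf_neq0 ?invr_neq0.
        + by rewrite exprMn exprVn -!rmorphXn e divff // rmorphXn expf_neq0.
        + by rewrite exprMn exprVn !exprM !(fixF F L iota p n cardF).
      by rewrite -(divfK iy0 (iota x)) R1 mul1r.
    * have sc z : (z + a) ^+ d + z ^+ d = a ^+ d * ((z / a + 1) ^+ d + (z / a) ^+ d).
        by rewrite mulrDr -!exprMn mulrDr mulr1 [a * (z / a)]mulrC divfK.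
      rewrite !sc in hx; have := mulfI (expf_neq0 d a0) hx.
      move/(inj1 F L iota p n k op pchL cardF k0 ev) => E.
      by apply: (mulIf (invr_neq0 a0)).
  + have := @leq_bigmax_cond _ (fun ab : F * F => ((-1 : F) != (1%R : F)) || (ab.1 != (0%R : F))) (fun ab : F * F => cDelta (fun x : F => x ^+ d) (-1) ab.1 ab.2) ((1:F), (1:F)) cond.
    apply: leq_trans; rewrite /= cD card_gt0; apply/set0Pn; exists 0.
    by rewrite inE add0r expr1n expr0n gtn_eqF // addr0.
Qed.
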